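(* For every signed permutation $\pi\in\mathfrak{B}_n$, \[\mathfrak{d}_B(\pi)=\sum_{\substack{E\subseteq\{0,1,\dots,n-1\}\\ \operatorname{Pe}_B(\pi)\subseteq E\cup(E+1)\\ \pi(1)<0\ \Rightarrow\ 0\in E}}2^{|E|}N_E,\] where $E+1=\{e+1: e\in E\}$.
   Context: $\mathfrak{B}_n$ is the group of signed permutations (bijections $\pi$ of $\{-n,\dots,n\}$ with $\pi(-i)=-\pi(i)$), written as words, with $\pi(0)=0$. $\operatorname{Pe}_B(\pi)$ is the set of $i\in\{1,\dots,n-1\}$ with $\pi(i-1)<\pi(i)>\pi(i+1)$. Work in formal power series in commuting variables $z_0,z_1,z_2,\dots$. For $E=\{e_1<\dots<e_m\}\subseteq\{0,\dots,n-1\}$ put $e_{m+1}=n$ and $N_E=\sum_{0<i_1<\dots<i_m}z_0^{e_1}\prod_{r=1}^m z_{i_r}^{e_{r+1}-e_r}$ (so $N_\emptyset=z_0^n$). Let $Z$ be the totally ordered set $0<\bar1<1<\bar2<2<\cdots$, with $0$ and unbarred $j$ ''plus-type'' and barred $\bar j$ ''minus-type'', and $|0|=0$, $|\bar j|=|j|=j$. Define $\mathfrak{d}_B(\pi)=\sum\prod_{s=1}^n z_{|a_s|}$, the sum over all sequences $(a_1,\dots,a_n)\in Z^n$ such that, with $a_0=0$, $a_0\le a_1\le\dots\le a_n$ and for each $s\in\{0,\dots,n-1\}$: if $\pi(s)<\pi(s+1)$ then $a_s<a_{s+1}$ or ($a_s=a_{s+1}$ is plus-type); if $\pi(s)>\pi(s+1)$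 then $a_s<a_{s+1}$ or ($a_s=a_{s+1}$ is minus-type). *)

(* Defs.v *)
From mathcomp Require Import all_boot all_order all_algebra.
Set Implicit Arguments. Unset Strict Implicit. Unset Printing Implicit Defensive.
Import Order.TTheory GRing.Theory Num.Theory.
Local Open Scope ring_scope.

(* Formal power series in commuting variables z_0, z_1, z_2, ...          *)
(* A monomial is a finite multiset of variable indices, represented by a  *)
(* list [mu] (z_{mu_1} * ... * z_{mu_k}); lists equal up to permutation   *)
(* represent the same monomial.  A power series (with nat coefficients)   *)
(* is given by its coefficient function [seq nat -> nat]; all series     *)
(* below are perm_eq-invariant by construction.                           *)
(* An object contributing to the coefficient of mu only uses indices      *)
(* <= max mu, so counting objects with indices < mono_bound mu is exact.  *)
Definition series := seq nat -> nat.

Definition mono_bound (mu : seq nat) : nat := (foldr maxn 0 mu).+1.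

(* (values outside {-n..n} are irrelevant).                                *)
Definition signed_perm (n : nat) (pi : int -> int) : Prop :=
  [/\ forall i : int, - (n%:Z) <= i <= n%:Z -> - (n%:Z) <= pi i <= n%:Z,
      forall i j : int, - (n%:Z) <= i <= n%:Z -> - (n%:Z) <= j <= n%:Z ->
        pi i = pi j -> i = j
    & forall i : int, - (n%:Z) <= i <= n%:Z -> pi (- i) = - pi i].

Definition PeB (n : nat) (pi : int -> int) (i : nat) : bool :=
  [&& (0 < i)%N, (i < n)%N, pi (Posz i.-1) < pi (Posz i) & pi (Posz i.+1) < pi (Posz i)].

(* The totally ordered set Z = 0 < -1bar < 1 < -2bar < 2 < ... is encoded  *)
(* in nat: 0 |-> 0, bar j |-> 2j-1, j |-> 2j (order preserving).          *)
(* |c| = uphalf c ; c is plus-type iff c is even, minus-type iff c odd.   *)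
Definition absZ (c : nat) : nat := uphalf c.
Definition plus_type (c : nat) : bool := ~~ odd c.
Definition minus_type (c : nat) : bool := odd c.

Definition aseq (a : seq nat) (s : nat) : nat :=
  if s is s'.+1 then nth 0%N a s' else 0%N.

Definition dB_ok (n : nat) (pi : int -> int) (a : seq nat) : bool :=
  [forall s : 'I_n,
     let x := aseq a s in let y := aseq a s.+1 in
     [&& (x <= y)%N,
         (pi (Posz s) < pi (Posz s.+1)) ==> ((x < y)%N || ((x == y) && plus_type y))
       & (pi (Posz s.+1) < pi (Posz s)) ==> ((x < y)%N || ((x == y) && minus_type y))]].

Definition dB (n : nat) (pi : int -> int) : series := fun mu =>
  #|[pred a : n.-tuple 'I_(2 * mono_bound mu) |
      dB_ok n pi [seq val c | c <- a] &&
      perm_eq [seq absZ (val c) | c <- a] mu]|.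

(* N_E.  For E = {e_1 < ... < e_m} (es = sorted list), e_{m+1} = n, and   *)
(* indices is = (i_1, ..., i_m), the monomial                              *)
(*   z_0^{e_1} prod_r z_{i_r}^{e_{r+1} - e_r}.                            *)
Definition NE_mono (n : nat) (es ix : seq nat) : seq nat :=
  nseq (head n es) 0%N ++
  flatten [seq nseq (p.1.2 - p.1.1)%N p.2 | p <- zip (zip es (rcons (behead es) n)) ix].

Definition Elist (n : nat) (E : {set 'I_n}) : seq nat :=
  sort leq [seq val e | e in E].

Definition NE (n : nat) (E : {set 'I_n}) : series := fun mu =>
  #|[pred ix : #|E|.-tuple 'I_(mono_bound mu) |
      sorted ltn (0%N :: [seq val i | i <- ix]) &&
      perm_eq (NE_mono n (Elist E) [seq val i | i <- ix]) mu]|.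

Definition admissible (n : nat) (pi : int -> int) (E : {set 'I_n}) : bool :=
  [forall i : 'I_n, PeB n pi i ==>
      ((i \in E) || [exists e in E, (val e).+1 == val i])]
  && (((0 < n)%N && (pi 1 < 0)) ==> [exists e in E, val e == 0%N]).

Definition rhs (n : nat) (pi : int -> int) : series := fun mu =>
  (\sum_(E : {set 'I_n} | @admissible n pi E) 2 ^ #|E| * NE E mu)%N.

(* Main.v *)
Require Import Defs.
From mathcomp Require Import all_boot all_order all_algebra.
From mathcomp Require Import zify.
Set Implicit Arguments. Unset Strict Implicit. Unset Printing Implicit Defensive.

Lemma count_sum (T : Type) (P : pred T) (s : seq T) :
  count P s = \sum_(x <- s) (P x : nat).
Proof. by elim: s => [|x s IH]; rewrite ?big_nil ?big_cons //= IH. Qed.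

Fixpoint lists (k K : nat) : seq (seq nat) :=
  if k is k'.+1 then [seq rcons l x | l <- lists k' K, x <- iota 0 K]
  else [:: [::]].

Lemma mem_lists k K l : (l \in lists k K) = (size l == k) && all (fun x => x < K) l.
Proof.
elim: k l => [|k IH] l /=.
  by case: l.
apply/allpairsP/idP.
  case=> [[l' x] [/= Hl' Hx ->]].
  move: Hl'; rewrite IH => /andP[/eqP Hs Ha].
  rewrite size_rcons Hs eqxx /= all_rcons Ha andbT.
  by rewrite mem_iota in Hx.
case/lastP: l => [|l x]; first by [].
rewrite size_rcons eqSS all_rcons => /andP[Hs /andP[Hx Ha]].
exists (l, x); split => //=; first by rewrite IH Hs Ha.
by rewrite mem_iota.
Qed.

Lemma uniq_lists k K : uniq (lists k K).
Proof.
elim: k => [|k IH] //=.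
apply: allpairs_uniq => //; first exact: iota_uniq.
by move=> [l x] [l' x'] _ _ /= /rcons_inj [-> ->].
Qed.

Lemma size_lists k K : size (lists k K) = K ^ k.
Proof.
elim: k => [|k IH] //=.
by rewrite size_allpairs IH size_iota expnS mulnC.
Qed.

Lemma card_tuple_lists m K (P : pred (seq nat)) :
  #|[pred t : m.-tuple 'I_K | P [seq val i | i <- t]]| = count P (lists m K).
Proof.
have Hinj : {in enum {: m.-tuple 'I_K} &, injective (fun t : m.-tuple 'I_K => [seq val i | i <- tval t])}.
  move=> t1 t2 _ _ /= H; apply: val_inj; apply: (inj_map val_inj); exact: H.
have Hu : uniq [seq [seq val i | i <- tval t] | t <- enum {: m.-tuple 'I_K}].
  by rewrite map_inj_in_uniq ?enum_uniq.
have Hperm : perm_eq [seq [seq val i | i <- tval t] | t <- enum {: m.-tuple 'I_K}] (lists m K).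
  apply: uniq_perm => //; first exact: uniq_lists.
  have Hsub : {subset [seq [seq val i | i <- tval t] | t <- enum {: m.-tuple 'I_K}] <= lists m K}.
    move=> l /mapP [t _ ->]; rewrite mem_lists size_map size_tuple eqxx /=.
    by apply/allP => x /mapP [i _ ->].
  apply: (snd (uniq_min_size Hu Hsub _)).
  by rewrite size_map -cardE card_tuple card_ord size_lists.
rewrite -(permP Hperm) count_map cardE -size_filter.
by rewrite /enum_mem -filter_predI; congr size; apply: eq_filter => x /=; rewrite andbT.
Qed.

Definition aseqv (v : nat) (b : seq nat) (s : nat) : nat :=
  if s is s'.+1 then nth 0%N b s' else v.

Definition Ff (n : nat) (es ix : seq nat) : seq nat :=
  flatten [seq nseq (p.1.2 - p.1.1)%N p.2 | p <- zip (zip es (rcons (behead es) n)) ix].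
Definition NEv (v n : nat) (es ix : seq nat) : seq nat := nseq (head n es) v ++ Ff n es ix.

Lemma NE_monoE n es ix : NE_mono n es ix = NEv 0 n es ix.
Proof. by []. Qed.

Lemma Ff_cons n e es x ix : Ff n (e :: es) (x :: ix) = nseq (head n es - e) x ++ Ff n es ix.
Proof.
rewrite /Ff /=.
case: es => [|e' es] //=.
Qed.

Lemma Ff_nil n es : Ff n es [::] = [::].
Proof. by rewrite /Ff; case: (zip es _). Qed.

Lemma Ff_nil2 n ix : Ff n [::] ix = [::].
Proof. by case: ix. Qed.

Lemma Ff_shift n es ix : Ff n.+1 (map succn es) ix = Ff n es ix.
Proof.
elim: es ix => [|e es IH] [|x ix] //; rewrite ?Ff_nil //.
rewrite /= !Ff_cons IH; congr (nseq _ _ ++ _).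
by case: es {IH}.
Qed.

Lemma NEv_shift v n es ix : NEv v n.+1 (map succn es) ix = v :: NEv v n es ix.
Proof.
rewrite /NEv Ff_shift.
by case: es.
Qed.

Lemma NEv_new v n es x ix : NEv v n.+1 (0 :: map succn es) (x :: ix) = x :: NEv x n es ix.
Proof.
rewrite /NEv /= Ff_cons Ff_shift subn0.
by case: es.
Qed.

Fixpoint enc (v : nat) (b : seq nat) : seq nat * seq nat :=
  if b is x :: b' then
    let p := enc x b' in
    if v < x then (0 :: map succn p.1, x :: p.2) else (map succn p.1, p.2)
  else ([::], [::]).

Lemma enc_dec v b : path leq v b -> NEv v (size b) (enc v b).1 (enc v b).2 = b.
Proof.
elim: b v => [|x b IH] v //=.
move=> /andP [Hvx Hp].
case: ltnP => H /=.
  by rewrite NEv_new IH.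
have Exv : x = v by apply/eqP; rewrite eqn_leq H.
subst x.
by rewrite NEv_shift IH.
Qed.

Lemma iota0S n : iota 0 n.+1 = 0 :: map succn (iota 0 n).
Proof.
have := iotaDl 1 0 n; rewrite addn0 /= => ->.
congr (_ :: _); apply: eq_map => x; by rewrite add1n.
Qed.

Lemma aseqv_cons v x b s : aseqv v (x :: b) s.+1 = aseqv x b s.
Proof. by case: s. Qed.

Lemma enc_inc v b : (enc v b).1 = [seq s <- iota 0 (size b) | aseqv v b s < aseqv v b s.+1].
Proof.
elim: b v => [|x b IH] v //.
rewrite [size _]/= iota0S /= filter_map IH.
have -> : [seq s <- iota 0 (size b) | preim succn (fun s => aseqv v (x :: b) s < aseqv v (x :: b) s.+1) s]
        = [seq s <- iota 0 (size b) | aseqv x b s < aseqv x b s.+1].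
  by apply: eq_filter => s; case: s.
by case: ltnP.
Qed.

Lemma enc_size v b : size (enc v b).2 = size (enc v b).1.
Proof.
elim: b v => [|x b IH] v //=.
by case: ltnP => _ /=; rewrite size_map IH.
Qed.

Lemma enc_path v b : path leq v b -> path ltn v (enc v b).2.
Proof.
elim: b v => [|x b IH] v //=.
move=> /andP [Hvx Hp].
case: ltnP => H /=.
  by rewrite H IH.
have Exv : x = v by apply/eqP; rewrite eqn_leq H.
subst x. exact: IH.
Qed.

Lemma enc_all (B : nat) v b : all (fun y => y < B) b -> all (fun y => y < B) (enc v b).2.
Proof.
elim: b v => [|x b IH] v //=.
move=> /andP [Hx Ha].
by case: ltnP => _ /=; rewrite ?Hx IH.
Qed.

Lemma dec_props n : forall v (P : pred nat) ix,
  size ix = count P (iota 0 n) -> path ltn v ix ->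
  [/\ size (NEv v n [seq s <- iota 0 n | P s] ix) = n,
      path leq v (NEv v n [seq s <- iota 0 n | P s] ix) &
      enc v (NEv v n [seq s <- iota 0 n | P s] ix) = ([seq s <- iota 0 n | P s], ix)].
Proof.
elim: n => [|n IH] v P ix.
  by case: ix.
rewrite iota0S /= count_map filter_map.
case HP0: (P 0) => /=.
  case: ix => [|x ix] //= [Hs] /andP [Hvx Hp].
  have [H1 H2 H3] := IH x (preim succn P) ix Hs Hp.
  rewrite NEv_new /= H1 H2 H3 /= Hvx (ltnW Hvx) /=.
  by [].
move=> Hs Hp.
have [H1 H2 H3] := IH v (preim succn P) ix Hs Hp.
rewrite NEv_shift /= H1 H2 H3 leqnn ltnn /=.
by [].
Qed.

Section ElistS.
Variable n : nat.

Lemma mem_Elist (E : {set 'I_n}) (i : 'I_n) : (val i \in Elist E) = (i \in E).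
Proof. by rewrite /Elist mem_sort (mem_map val_inj) mem_enum. Qed.

Lemma Elist_lt (E : {set 'I_n}) x : x \in Elist E -> x < n.
Proof. by rewrite /Elist mem_sort => /mapP [i _ ->]; apply: ltn_ord. Qed.

Lemma Elist_sorted (E : {set 'I_n}) : sorted ltn (Elist E).
Proof.
rewrite ltn_sorted_uniq_leq sort_uniq (map_inj_uniq val_inj) enum_uniq /=.
exact: (sort_sorted leq_total).
Qed.

Lemma Elist_filter (E : {set 'I_n}) : Elist E = [seq s <- iota 0 n | s \in Elist E].
Proof.
apply: (irr_sorted_eq ltn_trans ltnn); first exact: Elist_sorted.
  exact: (sorted_filter ltn_trans _ (iota_ltn_sorted 0 n)).
move=> x; rewrite mem_filter mem_iota /= add0n.
by case H: (x \in Elist E) => //=; rewrite (Elist_lt H).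
Qed.

Lemma Elist_inj (E1 E2 : {set 'I_n}) : Elist E1 = Elist E2 -> E1 = E2.
Proof. by move=> H; apply/setP => i; rewrite -!mem_Elist H. Qed.

Lemma size_Elist (E : {set 'I_n}) : size (Elist E) = #|E|.
Proof. by rewrite /Elist size_sort size_map -cardE. Qed.

Definition Eset (b : seq nat) : {set 'I_n} := [set i : 'I_n | aseq b i < aseq b i.+1].

Lemma Elist_Eset b : Elist (Eset b) = [seq s <- iota 0 n | aseq b s < aseq b s.+1].
Proof.
rewrite Elist_filter; apply: eq_in_filter => s; rewrite mem_iota add0n /= => Hs.
by rewrite -[s]/(val (Ordinal Hs)) mem_Elist inE.
Qed.

Lemma Elist_enc b : size b = n -> Elist (Eset b) = (enc 0 b).1.
Proof. by move=> Hs; rewrite Elist_Eset enc_inc Hs. Qed.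

End ElistS.

Lemma count_bij (T1 T2 : eqType) (f : T1 -> T2) (s1 : seq T1) (s2 : seq T2)
  (P : pred T1) (Q : pred T2) :
  uniq s1 -> uniq s2 ->
  (forall x y, x \in s1 -> P x -> y \in s1 -> P y -> f x = f y -> x = y) ->
  (forall x, x \in s1 -> P x -> f x \in s2 /\ Q (f x)) ->
  (forall y, y \in s2 -> Q y -> exists x, [/\ x \in s1, P x & f x = y]) ->
  count P s1 = count Q s2.
Proof.
move=> U1 U2 Hinj Hf Hs.
rewrite -!size_filter -(size_map f).
apply: perm_size; apply: uniq_perm.
- rewrite map_inj_in_uniq ?filter_uniq //.
  move=> x y; rewrite !mem_filter => /andP [Px xs] /andP [Py ys]; exact: Hinj.
- exact: filter_uniq.
move=> y; apply/mapP/idP.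
  case=> x; rewrite mem_filter => /andP [Px xs] ->.
  by have [H1 H2] := Hf x xs Px; rewrite mem_filter H1 H2.
rewrite mem_filter => /andP [Qy ys].
have [x [xs Px <-]] := Hs y ys Qy.
by exists x => //; rewrite mem_filter Px.
Qed.

Lemma mono_bound_lt (mu : seq nat) x : x \in mu -> x < mono_bound mu.
Proof.
rewrite /mono_bound ltnS.
elim: mu => [|y mu IH] //=.
rewrite inE => /orP [/eqP ->|H]; first exact: leq_maxl.
exact: leq_trans (IH H) (leq_maxr _ _).
Qed.

Lemma NE_count n (E : {set 'I_n}) mu :
  NE E mu = count (fun b => path leq 0 b && (Eset n b == E) && perm_eq b mu)
                  (lists n (mono_bound mu)).
Proof.
set B := mono_bound mu.
rewrite /NE.
have -> := card_tuple_lists #|E| B (fun l => sorted ltn (0 :: l) && perm_eq (NE_mono n (Elist E) l) mu).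
set es := Elist E.
have Hes : es = [seq s <- iota 0 n | s \in es] by exact: Elist_filter.
have Hcnt : count (fun s => s \in es) (iota 0 n) = #|E|.
  by rewrite -size_filter -Hes size_Elist.
apply: (@count_bij _ _ (NEv 0 n es)); rewrite ?uniq_lists //.
- move=> x y; rewrite !mem_lists => /andP [/eqP Hsx _] /andP [Px _] /andP [/eqP Hsy _] /andP [Py _] Hf.
  rewrite -Hcnt in Hsx Hsy.
  have [_ _ Ex] := dec_props Hsx Px.
  have [_ _ Ey] := dec_props Hsy Py.
  rewrite -Hes in Ex Ey.
  by move: Ex; rewrite Hf Ey => [[]].
- move=> x; rewrite mem_lists => /andP [/eqP Hsx _] /andP [Px Hp].
  rewrite -Hcnt in Hsx.
  have [H1 H2 H3] := dec_props Hsx Px.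
  rewrite -Hes in H1 H2 H3.
  rewrite NE_monoE in Hp.
  rewrite mem_lists H1 eqxx H2 Hp /= andbT; split.
    by apply/allP => y Hy; apply: mono_bound_lt; rewrite -(perm_mem Hp).
  apply/eqP; apply: Elist_inj.
  by rewrite (@Elist_enc n) // H3.
move=> b; rewrite mem_lists => /andP [/eqP Hsb Hall] /andP [/andP [Hp /eqP HE] Hperm].
have Hdec : NEv 0 n es (enc 0 b).2 = b.
  have -> : es = (enc 0 b).1 by rewrite /es -HE (@Elist_enc n).
  by rewrite -{1}Hsb enc_dec.
exists (enc 0 b).2; split => //.
- rewrite mem_lists enc_size -(@Elist_enc n) // HE size_Elist eqxx /=.
  exact: enc_all.
by rewrite /= (enc_path Hp) NE_monoE Hdec.
Qed.

Lemma rhs_sum n pi mu : rhs n pi mu =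
  \sum_(b <- lists n (mono_bound mu))
     (path leq 0 b * 2 ^ #|Eset n b| * admissible pi (Eset n b) * perm_eq b mu).
Proof.
rewrite /rhs.
rewrite (eq_bigr (fun E : {set 'I_n} => \sum_(b <- lists n (mono_bound mu)) 2 ^ #|E| * (path leq 0 b && (Eset n b == E) && perm_eq b mu))); last first.
  by move=> E _; rewrite NE_count count_sum big_distrr.
rewrite exchange_big /=; apply: eq_bigr => b _.
case Ha: (admissible pi (Eset n b)).
  rewrite (bigD1 (Eset n b)) //= eqxx big1 ?addn0.
    by rewrite andbT muln1; case: (path leq 0 b); case: (perm_eq b mu); rewrite /= ?muln0 ?mul1n ?muln1.
  by move=> E /andP [_ HE]; rewrite eq_sym (negbTE HE) andbF /= muln0.
rewrite muln0 mul0n big1 // => E HE.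
case: eqP => [Ee|]; last by rewrite andbF /= muln0.
by rewrite -Ee Ha in HE.
Qed.

Import Order.TTheory GRing.Theory Num.Theory.

Definition stp (pi : int -> int) (c x s : nat) : bool :=
  [&& c <= x, (pi s < pi s.+1)%R ==> ((c < x) || ((c == x) && plus_type x))
    & (pi s.+1 < pi s)%R ==> ((c < x) || ((c == x) && minus_type x))].

Definition okL (pi : int -> int) (k : nat) (a : seq nat) : bool :=
  all (fun s => stp pi (aseq a s) (aseq a s.+1) s) (iota 0 k).

Lemma dB_okE n pi a : dB_ok n pi a = okL pi n a.
Proof.
rewrite /dB_ok /okL; apply/forallP/allP.
  by move=> H s; rewrite mem_iota add0n => Hs; exact: (H (Ordinal Hs)).
by move=> H s; apply: H; rewrite mem_iota add0n ltn_ord.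
Qed.

Lemma aseq_rcons l x s : s <= size l -> aseq (rcons l x) s = aseq l s.
Proof. by case: s => //= s' H; rewrite nth_rcons H. Qed.

Lemma aseq_rcons_last l x : aseq (rcons l x) (size l).+1 = x.
Proof. by rewrite /= nth_rcons ltnn eqxx. Qed.

Lemma okL_rcons pi l x : okL pi (size l).+1 (rcons l x) =
  okL pi (size l) l && stp pi (aseq l (size l)) x (size l).
Proof.
rewrite /okL.
have -> : iota 0 (size l).+1 = iota 0 (size l) ++ [:: size l] by rewrite -addn1 iotaD.
rewrite all_cat /= andbT nth_rcons ltnn eqxx aseq_rcons //.
congr andb; apply: eq_in_all => s; rewrite mem_iota add0n /= => Hs.
by rewrite aseq_rcons ?(ltnW Hs) // nth_rcons Hs.

Qed.

Lemma aseq_map (f : nat -> nat) l s : f 0 = 0 -> aseq (map f l) s = f (aseq l s).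
Proof.
case: s => //= s' H0.
by elim: l s' => [|y l IH] [|s'] //=.
Qed.

Lemma half_split c : c = if odd c then (absZ c).*2.-1 else (absZ c).*2.
Proof.
rewrite /absZ uphalf_half. have := odd_double_half c. case: (odd c) => /=; lia.
Qed.

Definition xo (p : bool) (y : nat) := if p then y.*2.-1 else y.*2.

Lemma absZ_par x y p :
  (absZ x == y) && (odd x == p) = (if p then 0 < y else true) && (x == xo p y).
Proof.
rewrite /xo.
have Hx := half_split x.
have Hp : odd x -> 0 < x by case: x {Hx}.
case Ho: (odd x) Hx Hp => Hx Hp; case: p => /=; rewrite ?andbT ?andbF ?eqxx /=.
- have {}Hp := Hp isT.
  apply/idP/idP => [/eqP E|/andP [H /eqP E]]; last (apply/eqP; lia).
  by apply/andP; split; apply/eqP || idtac; lia.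
- by apply/esym/eqP => E; lia.
- by apply/esym/andP => [[H /eqP E]]; lia.
- by apply/idP/idP => /eqP E; apply/eqP; lia.
Qed.

Lemma count_pick (s : seq nat) (P : pred nat) z :
  uniq s -> \sum_(x <- s) (P x && (x == z) : nat) = P z * (z \in s).
Proof.
move=> U; rewrite -count_sum.
have -> : count (fun x => P x && (x == z)) s = P z * count_mem z s.
  elim: s {U} => [|x s IH] /=; first by rewrite muln0.
  rewrite IH mulnDr; congr (_ + _).
  by case: eqP => [->|_]; rewrite ?andbT ?andbF ?muln0 ?muln1 // eqxx.
by rewrite count_uniq_mem.
Qed.

Definition W (pi : int -> int) (K k : nat) (b : seq nat) (p : bool) : nat :=
  \sum_(a <- lists k K) (okL pi k a && (map absZ a == b) && (odd (aseq a k) == p)).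

Lemma W_rec pi K b y p : y.*2 < K ->
  W pi K (size b).+1 (rcons b y) p =
   (if p then 0 < y else true) *
   (W pi K (size b) b false * stp pi (aseq b (size b)).*2 (xo p y) (size b)
    + W pi K (size b) b true * stp pi (aseq b (size b)).*2.-1 (xo p y) (size b)).
Proof.
move=> HyK.
set k := size b.
rewrite /W [lists _.+1 _]/= big_allpairs_dep /=.
rewrite !big_distrl -big_split big_distrr /=.
rewrite big_seq_cond [in RHS]big_seq_cond.
apply: eq_bigr => l /andP [Hl _].
move: Hl; rewrite mem_lists => /andP [/eqP Hsl _].
have Hc : absZ (aseq l k) = aseq b k -> aseq l k = if odd (aseq l k) then (aseq b k).*2.-1 else (aseq b k).*2.
  by move=> <-; exact: half_split.
set c := aseq l k.
rewrite (eq_bigr (fun x => (okL pi k l && (map absZ l == b)) * (stp pi c x k && ((if p then 0 < y else true) && (x == xo p y))))); last first.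
  move=> x _.
  rewrite -Hsl okL_rcons map_rcons eqseq_rcons ?nth_rcons ltnn eqxx Hsl -/c -absZ_par.
  by case: (okL _ _ l); case: (map absZ l == b); case: (stp _ _ _ _); case: (absZ x == y); case: (odd x == p).
rewrite -big_distrr /=.
have -> : \sum_(x <- iota 0 K) (stp pi c x k && ((if p then 0 < y else true) && (x == xo p y)) : nat)
   = (if p then 0 < y else true) * stp pi c (xo p y) k.
  rewrite (eq_bigr (fun x => ((stp pi c x k && (if p then 0 < y else true)) && (x == xo p y) : nat))); last first.
    by move=> x _; rewrite andbA.
  rewrite count_pick ?iota_uniq // mem_iota add0n /=.
  have -> : xo p y < K by rewrite /xo; case: p; lia.
  by rewrite muln1; case: (stp _ _ _ _); case: (if p then _ else _).
case Hm: (map absZ l == b); rewrite ?andbF ?andbT /= ?mul0n ?addn0 ?muln0 //.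
have Eb : absZ c = aseq b k.
  by rewrite -(eqP Hm) /c -Hsl (aseq_map _ _ (erefl 0)).
have Ec := Hc Eb.
rewrite -/c in Ec.
case Ho: (odd c) Ec => Ec; rewrite -Ec; case: (okL _ _ _); rewrite /= ?mul1n ?mul0n ?muln0 ?add0n ?addn0 //.
Qed.

Import Order.TTheory GRing.Theory Num.Theory.

Definition pk (pi : int -> int) (s : nat) : bool :=
  [&& 0 < s, (pi s.-1 < pi s)%R & (pi s.+1 < pi s)%R].
Definition fct (pi : int -> int) (b : seq nat) (s : nat) : nat :=
  (aseq b s <= aseq b s.+1) * (if aseq b s < aseq b s.+1 then 2 else 1) *
  (pk pi s ==> (aseq b s.-1 < aseq b s) || (aseq b s < aseq b s.+1)) *
  ((s == 0) ==> (pi 1 < 0)%R ==> (aseq b s < aseq b s.+1)).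
Definition hprod (pi : int -> int) (b : seq nat) : nat := \prod_(0 <= s < size b) fct pi b s.
Definition dst (pi : int -> int) (b : seq nat) : bool :=
  [&& 0 < size b, 0 < aseq b (size b) &
      (aseq b (size b).-1 < aseq b (size b)) || (pi (size b) < pi (size b).-1)%R].

Lemma hprod_rcons pi b y : hprod pi (rcons b y) = hprod pi b * fct pi (rcons b y) (size b).
Proof.
rewrite /hprod size_rcons big_nat_recr //=; congr (_ * _).
apply: eq_big_nat => s /andP [_ Hs].
have Hs1 : s.-1 <= size b by apply: leq_trans (leq_pred s) (ltnW Hs).
by rewrite /fct !aseq_rcons // ltnW.
Qed.

Lemma fct_last pi b y : fct pi (rcons b y) (size b) =
  (aseq b (size b) <= y) * (if aseq b (size b) < y then 2 else 1) *
  (pk pi (size b) ==> (aseq b (size b).-1 < aseq b (size b)) || (aseq b (size b) < y)) *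
  (((size b) == 0) ==> (pi 1 < 0)%R ==> (aseq b (size b) < y)).
Proof. by rewrite /fct aseq_rcons_last !aseq_rcons // leq_pred. Qed.

Lemma stp_lt pi c x s : c < x -> stp pi c x s = true.
Proof. by move=> H; rewrite /stp (ltnW H) H !implybT. Qed.
Lemma stp_gt pi c x s : x < c -> stp pi c x s = false.
Proof. by move=> H; rewrite /stp leqNgt H. Qed.
Lemma stp_eq pi x s : stp pi x x s =
  ((pi s < pi s.+1)%R ==> ~~ odd x) && ((pi s.+1 < pi s)%R ==> odd x).
Proof. by rewrite /stp leqnn ltnn eqxx. Qed.

Section Inv.
Variables (pi : int -> int) (n K : nat).
Hypothesis Hinj : forall i j : nat, i <= n -> j <= n -> pi i = pi j -> i = j.
Hypothesis H0 : pi 0 = 0%R.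

Lemma pi_tot i j : i <= n -> j <= n -> i != j -> (pi i < pi j)%R || (pi j < pi i)%R.
Proof.
move=> Hi Hj Hij; apply: lt_total; apply/eqP => E.
by move/eqP: Hij; apply; apply: Hinj.
Qed.

Lemma Winv b : size b <= n -> all (fun y => y.*2 < K) b ->
 [/\ W pi K (size b) b true = (if dst pi b then W pi K (size b) b false else 0),
     W pi K (size b) b false + W pi K (size b) b true = hprod pi b &
     [&& aseq b (size b) == 0, 0 < size b & (pi (size b) < pi (size b).-1)%R] ->
        W pi K (size b) b false = 0].
Proof.
elim/last_ind: b => [|b y IH].
  move=> _ _; rewrite /W /hprod /dst /= !big_cons !big_nil /=.
  by split.
rewrite size_rcons all_rcons => Hn /andP [Hy Hall].
have [I1 I2 I3] := IH (ltnW Hn) Hall.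
have Hd : dst pi (rcons b y) = (0 < y) && ((aseq b (size b) < y) || (pi (size b).+1 < pi (size b))%R).
  by rewrite /dst size_rcons aseq_rcons_last /= aseq_rcons.
rewrite Hd !W_rec // hprod_rcons fct_last aseq_rcons_last {Hd IH}.
move: I1 I2 I3 Hn.
set k := size b.
set U := W pi K k b false. set D := W pi K k b true.
set c := aseq b k. set cp := aseq b k.-1.
rewrite /xo => I1 I2 I3 Hn.
rewrite -I2 mul1n.
have Hk0 : k = 0 -> c = 0 by rewrite /c => ->.
case: (ltngtP c y) => Hcy.
- have Hy0 : 0 < y by lia.
  rewrite (@stp_lt pi c.*2 y.*2.-1 k); last lia.
  rewrite (@stp_lt pi c.*2.-1 y.*2.-1 k); last lia.
  rewrite (@stp_lt pi c.*2 y.*2 k); last lia.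
  rewrite (@stp_lt pi c.*2.-1 y.*2 k); last lia.
  rewrite Hy0 /= ?orbT ?implybT /=.
  split; rewrite ?mul1n ?muln1 ?muln2 -?addnn //.
  by move=> /andP [Hy' _]; move: Hy'; rewrite eqn0Ngt Hy0.
- rewrite (@stp_gt pi c.*2 y.*2.-1 k); last lia.
  rewrite (@stp_gt pi c.*2.-1 y.*2.-1 k); last lia.
  rewrite (@stp_gt pi c.*2 y.*2 k); last lia.
  rewrite (@stp_gt pi c.*2.-1 y.*2 k); last lia.
  rewrite /= ?muln0 ?mul0n /=.
  by split => //; case: ifP.
rewrite -Hcy.
case: (posnP c) => Hc0.
  have HD : D = 0.
    rewrite I1 /dst -/k -/c Hc0 /=.
    by case: (0 < k).
  rewrite HD Hc0 /= !stp_eq /= ?implybT ?implybF /= ?mul0n ?addn0 ?mul1n ?addn0.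
  split => //; last by move=> ->; rewrite muln0.
  case Hdesc: (pi k.+1 < pi k)%R => /=; rewrite ?muln0 ?muln1 ?mul1n.
    case: (posnP k) => Hk.
      move: Hdesc; rewrite Hk H0 => Hd1; by rewrite Hd1 /= !muln0.
    rewrite /=.
    case Hasc: (pi k.-1 < pi k)%R.
      by rewrite /pk Hk Hasc Hdesc /= !muln0.
    have := pi_tot (i := k.-1) (j := k) (leq_trans (leq_pred k) (ltnW Hn)) (ltnW Hn).
    rewrite Hasc /= => H.
    have Hlt : (pi k < pi k.-1)%R by apply: H; lia.
    by rewrite I3 ?mul0n // Hc0 eqxx Hk Hlt.
  have -> : pk pi k = false by rewrite /pk Hdesc !andbF.
  rewrite /=.
  case: (posnP k) => Hk.
    move: Hdesc; rewrite Hk H0 /= => ->; by rewrite /= ?mul1n ?muln1.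
  by rewrite /= mul1n muln1.
have Hk : 0 < k by case: (posnP k) => // /Hk0; lia.
have Ek : (k == 0) = false by lia.
rewrite (stp_eq pi c.*2 k) odd_double (@stp_lt pi c.*2.-1 c.*2 k); last lia.
rewrite (@stp_gt pi c.*2 c.*2.-1 k); last lia.
rewrite (stp_eq pi c.*2.-1 k) (_ : odd c.*2.-1 = true); last first.
  by case: (c) Hc0 => // c' _; rewrite doubleS /= odd_double.
rewrite ?Hc0 ?ltnn ?Ek /= ?orbF ?implybT ?implybF ?muln0 ?add0n ?muln1 ?mul1n ?andbT ?andTb.
split => //.
- case Hdesc: (pi k.+1 < pi k)%R => /=.
    by rewrite (lt_gtF Hdesc) /= muln0 muln1.
  have Hasc : (pi k < pi k.+1)%R.
    have := pi_tot (i := k) (j := k.+1) (ltnW Hn) Hn.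
    by rewrite Hdesc orbF; apply; lia.
  by rewrite Hasc muln0.
- case Hdesc: (pi k.+1 < pi k)%R => /=.
    rewrite (lt_gtF Hdesc) /= muln0 add0n muln1.
    move: I1; rewrite /dst -/k -/c -/cp Hk Hc0 /=.
    case Hcp: (cp < c) => /=.
      by rewrite implybT muln1 => ->.
    case Hlt: (pi k < pi k.-1)%R => /= ->.
      have -> : pk pi k = false by rewrite /pk (lt_gtF Hlt) andbF.
      by rewrite muln1.
    have Hasc : (pi k.-1 < pi k)%R.
      have := pi_tot (i := k.-1) (j := k) (leq_trans (leq_pred k) (ltnW Hn)) (ltnW Hn).
      by rewrite Hlt orbF; apply; lia.
    by rewrite /pk Hk Hasc Hdesc /= !muln0.
  have -> : pk pi k = false by rewrite /pk Hdesc !andbF.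
  have Hasc : (pi k < pi k.+1)%R.
    have := pi_tot (i := k) (j := k.+1) (ltnW Hn) Hn.
    by rewrite Hdesc orbF; apply; lia.
  by rewrite Hasc /= !muln0 !addn0 !muln1.
Qed.
End Inv.

Import Order.TTheory GRing.Theory Num.Theory.

Lemma prod_bool n (P : 'I_n -> bool) : \prod_(i < n) (P i : nat) = [forall i, P i].
Proof.
case: (pickP (fun i => ~~ P i)) => [i Hi|Hn].
  rewrite (bigD1 i) //= (negbTE Hi) mul0n.
  case: forallP => // H; by rewrite H in Hi.
rewrite big1 => [|i _]; last by have := Hn i; case: (P i).
case: forallP => // H; case: H => i; by have := Hn i; case: (P i).
Qed.

Lemma path_forall n b : size b = n ->
  path leq 0 b = [forall i : 'I_n, aseq b i <= aseq b i.+1].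
Proof.
move=> Hs; apply/(pathP 0)/forallP.
  by move=> H i; move: (H i); rewrite Hs ltn_ord => /(_ isT); case: (nat_of_ord i).
by move=> H i Hi; rewrite Hs in Hi; move: (H (Ordinal Hi)) => /=; case: i Hi.
Qed.

Lemma card_Eset n b : #|Eset n b| = \sum_(i < n) (aseq b i < aseq b i.+1 : nat).
Proof.
rewrite -sum1_card big_mkcond /=; apply: eq_bigr => i _.
by rewrite inE; case: (_ < _).
Qed.

Lemma hprod_eq pi n b : size b = n ->
  hprod pi b = path leq 0 b * 2 ^ #|Eset n b| * admissible pi (Eset n b).
Proof.
move=> Hs.
rewrite /hprod Hs big_mkord /fct !big_split /= !prod_bool -path_forall //.
rewrite card_Eset expn_sum.
have -> : \prod_(i < n) (if aseq b i < aseq b i.+1 then 2 else 1) = \prod_(i < n) 2 ^ (aseq b i < aseq b i.+1).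
  by apply: eq_bigr => i _; case: (_ < _).
rewrite -!mulnA; congr (_ * (_ * _)).
rewrite /admissible.
have -> : [forall i : 'I_n, pk pi i ==> (aseq b i.-1 < aseq b i) || (aseq b i < aseq b i.+1)] =
  [forall i : 'I_n, PeB n pi i ==> ((i \in Eset n b) || [exists e in Eset n b, (val e).+1 == val i])].
  apply: eq_forallb => i.
  rewrite /PeB /pk ltn_ord /= inE.
  case: (posnP i) => Hi; first by rewrite /=.
  rewrite /=; congr (_ ==> _); rewrite orbC; congr (_ || _).
  apply/idP/existsP.
    move=> H.
    have Hi' : i.-1 < n by apply: leq_trans (ltn_ord i); lia.
    exists (Ordinal Hi'); rewrite inE /=.
    have -> : i.-1.+1 = i by lia.
    rewrite eqxx andbT; move: H; case: (nat_of_ord i) Hi => // i' _ H; exact H.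
  case=> e /andP [He /eqP Hei]; move: He; rewrite inE -Hei /= => H; exact H.
have -> : [forall i : 'I_n, (i == 0 :> nat) ==> (pi 1 < 0)%R ==> (aseq b i < aseq b i.+1)] =
  ((0 < n) && (pi 1 < 0)%R) ==> [exists e in Eset n b, val e == 0].
  case: (posnP n) => Hn.
    rewrite /=; subst n; apply/forallP => -[i Hi]; exfalso; lia.
  apply/forallP/implyP.
    move=> H /andP [_ Hp]; apply/existsP; exists (Ordinal Hn); rewrite /= eqxx andbT inE.
    by have := H (Ordinal Hn); rewrite /= Hp.
  move=> H i; apply/implyP => /eqP Hi0; apply/implyP => Hp.
  move: H; rewrite Hp /= => /(_ isT) /existsP [e /andP [He /eqP He0]].
  have -> : i = e by apply: ord_inj; rewrite He0 Hi0.
  by rewrite inE in He.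
by case: [forall i, _]; case: (_ ==> _).
Qed.

Lemma sum_pick (T : eqType) (s : seq T) (z : T) (F : T -> nat) :
  uniq s -> \sum_(x <- s) ((x == z) : nat) * F x = (z \in s) * F z.
Proof.
elim: s => [|x s IH] /=; first by rewrite big_nil.
move=> /andP [Hx U]; rewrite big_cons IH // inE.
case: (eqVneq x z) => [Exz|Hxz].
  by subst; rewrite (negbTE Hx) /= mul1n mul0n addn0.
by rewrite /= mul0n add0n.
Qed.

Lemma dB_sum n pi mu : dB n pi mu =
  \sum_(b <- lists n (mono_bound mu))
    (W pi (2 * mono_bound mu) n b false + W pi (2 * mono_bound mu) n b true) * perm_eq b mu.
Proof.
set B := mono_bound mu. set K := 2 * B.
rewrite /dB -/B -/K.
have -> : #|[pred a : n.-tuple 'I_K | dB_ok n pi [seq val c | c <- a] && perm_eq [seq absZ (val c) | c <- a] mu]|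
   = #|[pred a : n.-tuple 'I_K | (fun l => okL pi n l && perm_eq (map absZ l) mu) [seq val c | c <- a]]|.
  apply: eq_card => a; rewrite !inE /= dB_okE; congr (_ && perm_eq _ mu).
  by elim: (tval a) => //= x s ->.
rewrite (card_tuple_lists n K (fun l => okL pi n l && perm_eq (map absZ l) mu)) count_sum.
rewrite (eq_big_seq (fun l => \sum_(b <- lists n B) ((b == map absZ l) : nat) * (okL pi n l * perm_eq b mu))); last first.
  move=> l; rewrite mem_lists => /andP [/eqP Hsl _].
  rewrite sum_pick ?uniq_lists //.
  case Hp: (perm_eq (map absZ l) mu); last by rewrite andbF !muln0.
  have -> : map absZ l \in lists n B.
    rewrite mem_lists size_map Hsl eqxx /=.
    by apply/allP => x Hx; apply: mono_bound_lt; rewrite -(perm_mem Hp).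
  by rewrite mul1n andbT muln1.
rewrite exchange_big /=; apply: eq_bigr => b _.
rewrite /W -big_split big_distrl /=.
apply: eq_bigr => l _.
rewrite eq_sym; case: (map absZ l == b); case: (okL _ _ _); case: (perm_eq b mu); rewrite ?mul0n ?mul1n ?muln0 ?muln1 //=;
  by case: (odd _).
Qed.

Unset Implicit Arguments.
Theorem theorem6p3 (n : nat) (pi : int -> int) :
  signed_perm n pi -> forall mu : seq nat, dB n pi mu = rhs n pi mu.
Proof.
move=> [H1 H2 H3] mu.
have Hinj : forall i j : nat, i <= n -> j <= n -> pi i = pi j -> i = j.
  move=> i j Hi Hj E.
  have Hi' : (- (n%:Z) <= i%:Z <= n%:Z)%R by apply/andP; split; lia.
  have Hj' : (- (n%:Z) <= j%:Z <= n%:Z)%R by apply/andP; split; lia.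
  by have := H2 _ _ Hi' Hj' E; case.
have H0 : pi 0 = 0%R.
  have H0' : (- (n%:Z) <= 0%:Z <= n%:Z)%R by apply/andP; split; lia.
  have := H3 _ H0'; rewrite oppr0 => H.
  have H' : pi (Posz 0) = (- pi (Posz 0))%R := H.
  lia.
rewrite dB_sum rhs_sum; apply: eq_big_seq => b.
rewrite mem_lists => /andP [/eqP Hsb Hall].
have Hall2 : all (fun y => y.*2 < 2 * mono_bound mu) b.
  apply/allP => y Hy; have := allP Hall y Hy; lia.
have [_ I2 _] := @Winv pi n (2 * mono_bound mu) Hinj H0 b (eq_leq Hsb) Hall2.
rewrite -Hsb I2 ?(hprod_eq pi Hsb) //.
by rewrite Hsb.
Qed.
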